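(* Let $K$ be a subgroup of $\mathrm{Spin}_8\subset\mathrm{Spin}_{10,1}$ and let $N$ be a subgroup of the null-rotation group $\{\mathbb{1}+\sum_\mu c_\mu\Sigma_{+\mu}: c\in\mathbb{R}^9\}$ containing a non-identity element; let $G$ be the subgroup generated by $K$ and $N$. For a subgroup $H$ write $\Delta^H$ for the $H$-invariant spinors, and set $\Delta^K_\pm=\Delta^K\cap\ker\Gamma_\pm$. Then: (i) $\Delta^K=\Delta^K_+\oplus\Delta^K_-$, $\Gamma_\pm$ restricts to an isomorphism $\Delta^K_\mp\to\Delta^K_\pm$, and $\dim\Delta^K_+=\dim\Delta^K_-=\tfrac12\dim\Delta^K$; $\dim\Delta^K$ is even; (ii) $\Delta^G=\Delta^K_+$, so $\dim\Delta^G=\tfrac12\dim\Delta^K$; (iii) if $\pi$ is a unit simple $(5,1)$-vector whose plane contains $e_0$ and $e_9$, and $\Delta(\pm\pi)=\{\varepsilon:\pi\cdot\varepsilon=\pm\varepsilon\}$, then $\Gamma_+$ maps $\Delta^K_-\cap\Delta(\pi)$ isomorphically onto $\Delta^K_+\cap\Delta(-\pi)$ and $\Delta^K_-\cap\Delta(-\pi)$ isomorphically onto $\Delta^K_+\cap\Delta(\pi)$; in particular $\dim(\Delta(\pi)\cap\Delta^G)\le\tfrac12\dim\Delta^K$.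
   Context: Let $\mathbb{M}^{10,1}$ be $\mathbb{R}^{11}$ with orthonormal basis $e_0,e_1,\dots,e_9,e_\natural$ and Lorentzian metric $\eta$ with $\eta(e_0,e_0)=-1$ and $\eta(e_M,e_M)=+1$ for $M\neq 0$. The Clifford algebra $\mathrm{C}\ell_{1,10}$ is generated by $\Gamma_M$, $M\in\{0,1,\dots,9,\natural\}$, with $\Gamma_M\Gamma_N+\Gamma_N\Gamma_M=2\eta_{MN}\mathbb{1}$; simple multivectors of orthogonal vectors act by Clifford products. $\Delta$ denotes the $32$-dimensional real irreducible representation of $\mathrm{C}\ell_{1,10}$ on which $\Gamma_0\Gamma_1\cdots\Gamma_9\Gamma_\natural=-\mathbb{1}$. $\Sigma_{MN}=-\tfrac12\Gamma_M\Gamma_N$; $\mathrm{Spin}_8$ is the connected subgroup of $\mathrm{Spin}_{10,1}$ with Lie algebra spanned by $\Sigma_{ij}$, $1\le i<j\le 8$. $\Gamma_\pm=\Gamma_0\pm\Gamma_9$ and $\Sigma_{+\mu}=-\tfrac12\Gamma_+\Gamma_\mu$ for $\mu\in\{1,\dots,8,\natural\}$. *)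

(* Defs.v *)
From HB Require Import structures.
From mathcomp Require Import all_boot all_order all_algebra.
From mathcomp Require Import all_classical all_reals all_analysis.
Set Implicit Arguments. Unset Strict Implicit. Unset Printing Implicit Defensive.
Import Order.TTheory GRing.Theory Num.Theory.
Import numFieldNormedType.Exports.
Local Open Scope classical_set_scope.
Local Open Scope ring_scope.

(* Index conventions: 'I_11 indexes e_0, e_1, ..., e_9, e_natural;
   index 0 is e_0 (timelike), index 9 is e_9, index 10 is e_natural. *)
Definition i9 : 'I_11 := @Ordinal 11 9 isT.
Definition inat : 'I_11 := @Ordinal 11 10 isT.

Section Clifford.
Variable R : realType.

Definition eta (M N : 'I_11) : R :=
  if M == N then (if M == ord0 then -1 else 1) else 0.

Definition etaV (x y : 'rV[R]_11) : R :=
  \sum_(M < 11) \sum_(N < 11) eta M N * x ord0 M * y ord0 N.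

Definition evec (M : 'I_11) : 'rV[R]_11 := \row_(N < 11) (N == M)%:R.

Definition clifford_rep (Gam : 'I_11 -> 'M[R]_32) : Prop :=
  (forall M N : 'I_11, Gam M * Gam N + Gam N * Gam M = (2 * eta M N)%:M)
  /\ \prod_(M < 11) Gam M = - 1.

Variable Gam : 'I_11 -> 'M[R]_32.

Definition GamV (x : 'rV[R]_11) : 'M[R]_32 := \sum_(M < 11) x ord0 M *: Gam M.

Definition Sig (M N : 'I_11) : 'M[R]_32 := - (2%:R^-1) *: (Gam M * Gam N).
Definition Gplus : 'M[R]_32 := Gam ord0 + Gam i9.
Definition Gminus : 'M[R]_32 := Gam ord0 - Gam i9.
Definition SigPlus (mu : 'I_11) : 'M[R]_32 := - (2%:R^-1) *: (Gplus * Gam mu).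

Definition mexp (X : 'M[R]_32) : 'M[R]_32 :=
  lim (series (fun k : nat => (k`!%:R)^-1 *: X ^+ k) @ \oo).

Definition spin8_alg (X : 'M[R]_32) : Prop :=
  exists c : 'I_11 -> 'I_11 -> R,
    X = \sum_(i < 11 | (1 <= i)%N) \sum_(j < 11 | (i < j)%N && (j <= 8)%N)
          c i j *: Sig i j.

(* Spin_8: the connected Lie subgroup with Lie algebra spin8_alg, i.e. the
   group generated by exp of its Lie algebra (finite products of exponentials) *)
Definition Spin8 : set 'M[R]_32 :=
  [set g | exists s : seq 'M[R]_32, (forall X, X \in s -> spin8_alg X) /\
                                     g = \prod_(X <- s) mexp X].

Definition NullRot : set 'M[R]_32 :=
  [set g | exists c : 'I_11 -> R,
     g = 1 + \sum_(mu < 11 | (mu != ord0) && (mu != i9)) c mu *: SigPlus mu].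

End Clifford.

Definition is_subgroup (R : realType) (H : set 'M[R]_32) : Prop :=
  H 1 /\ (forall a b, H a -> H b -> H (a * b)) /\
  (forall a, H a -> a \in unitmx /\ H (invmx a)).

Definition gen_subgroup (R : realType) (S : set 'M[R]_32) : set 'M[R]_32 :=
  [set g | forall H, is_subgroup H -> S `<=` H -> H g].

Definition invariants (R : realType) (H : set 'M[R]_32) : set 'cV[R]_32 :=
  [set v | forall h, H h -> h *m v = v].

Definition kerM (R : realType) (A : 'M[R]_32) : set 'cV[R]_32 :=
  [set v | A *m v = 0].

(* the +1 eigenspace of a matrix (Delta(pi) for pi acting by P) *)
Definition fixsp (R : realType) (A : 'M[R]_32) : set 'cV[R]_32 :=
  [set v | A *m v = v].

Definition vspace_of (R : realType) (S : set 'cV[R]_32) : {vspace 'cV[R]_32} :=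
  xget 0%VS [set U : {vspace 'cV[R]_32} | forall v, v \in U <-> S v].
Definition dimS (R : realType) (S : set 'cV[R]_32) : nat := \dim (vspace_of S).

Definition iso_onto (R : realType) (A : 'M[R]_32) (S T : set 'cV[R]_32) : Prop :=
  (forall v, S v -> T (A *m v)) /\
  (forall v w, S v -> S w -> A *m v = A *m w -> v = w) /\
  (forall w, T w -> exists v, S v /\ A *m v = w).

Definition direct_sum (R : realType) (S A B : set 'cV[R]_32) : Prop :=
  (forall v, S v <-> exists a b, A a /\ B b /\ v = a + b) /\
  (forall v, A v -> B v -> v = 0).

(* Main.v *)
Require Import Defs.
From HB Require Import structures.
From mathcomp Require Import all_boot all_order all_algebra.
From mathcomp Require Import all_classical all_reals all_analysis.
From mathcomp Require Import ring.
Import Order.TTheory GRing.Theory Num.Theory.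
Import numFieldNormedType.Exports.
Local Open Scope classical_set_scope.
Local Open Scope ring_scope.
Section S. Variable R : realType.

Lemma cont_sum (I : Type) (r : seq I) (g : I -> 'M[R]_32 -> R) :
  (forall k, continuous (g k)) -> continuous (fun Y => \sum_(k <- r) g k Y).
Proof.
move=> H; elim: r => [|a r IH].
  have -> : (fun Y : 'M[R]_32 => \sum_(k <- [::]) g k Y) = fun=> 0.
    by apply: funext => Y; rewrite big_nil.
  exact: cst_continuous.
have -> : (fun Y : 'M[R]_32 => \sum_(k <- a :: r) g k Y) =
   (g a + (fun Y => \sum_(k <- r) g k Y))%R.
  by apply: funext => Y; rewrite big_cons.
by move=> x; apply: continuousD; [exact: H | exact: IH].
Qed.

Lemma coord_cont (i j : 'I_32) : continuous (fun Y : 'M[R]_32 => Y i j).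
Proof. exact: coord_continuous. Qed.

Lemma cont_lin (a b : 'I_32) (c : R) : continuous (fun Y : 'M[R]_32 => Y a b * c).
Proof.
move=> x.
apply: (@continuousM R _ (fun Y : 'M[R]_32 => Y a b) (fun=> c)).
  exact: coord_cont.
exact: cst_continuous.
Qed.

Lemma comm_cont (A : 'M[R]_32) (i j : 'I_32) :
  continuous (fun Y : 'M[R]_32 => (Y * A - A * Y) i j).
Proof.
have -> : (fun Y : 'M[R]_32 => (Y * A - A * Y) i j) =
  (fun Y => \sum_(k <- index_enum 'I_32) (Y i k * A k j + Y k j * - A i k)).
  apply: funext => Y; rewrite !mxE -sumrB; apply: eq_bigr => k _.
  by rewrite mulrN (mulrC (Y k j)).
apply: cont_sum => k x.
apply: (@continuousD _ _ _ (fun Y : 'M[R]_32 => Y i k * A k j) (fun Y => Y k j * - A i k));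
  exact: cont_lin.
Qed.

Lemma mexp_comm (X A : 'M[R]_32) : X * A = A * X -> mexp X * A = A * mexp X.
Proof.
move=> XA.
set u := (fun k : nat => (k`!%:R)^-1 *: X ^+ k).
have part : forall n, series u n * A = A * series u n.
  move=> n; rewrite /series /= mulr_suml mulr_sumr; apply: eq_bigr => k _.
  rewrite /u -scalerAl -scalerAr; congr (_ *: _).
  have cAX : GRing.comm A X by [].
  by rewrite (commrX k cAX).
rewrite /mexp -/u.
case: (pselect (cvg (series u @ \oo))) => [cv|ncv]; last first.
  rewrite (dvgP ncv).
  match goal with |- ?p * _ = _ => have -> : p = 0 end.
    apply/matrixP => a b; rewrite !mxE. reflexivity.
  by rewrite mul0r mulr0.
apply/eqP; rewrite -subr_eq0; apply/eqP/matrixP => i j.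
rewrite [RHS]mxE.
set l := lim _ in cv *.
have h1 := continuous_cvg _ (comm_cont A i j l) cv.
have {}h1 := h1 eventually_filter.
have hn : \forall n \near \oo, [set x : R | x = 0] (((fun Y : 'M[R]_32 => (Y * A - A * Y) i j) \o series u) n).
  by apply: nearW => n /=; rewrite part subrr mxE.
have := (closed_cvg _ (@closed_eq R 0) hn _ h1); by apply.
Qed.

End S.
Set Implicit Arguments. Unset Strict Implicit.

Lemma pm_id (T : pzRingType) (a b : T) :
  (a+b)*(a-b) + (a-b)*(a+b) = (a*a - b*b) *+ 2.
Proof.
rewrite !mulrDr !mulrDl !mulrN !mulNr.
rewrite mulr2n.
set x := a * a. set y := a * b. set z := b * a. set w := b * b.
by rewrite addrACA (addrACA x) subrr addr0 (addrACA (-y)) addNr add0r [RHS]addrACA.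
Qed.

Lemma pp_id (T : pzRingType) (a b : T) :
  (a+b)*(a+b) = (a*a + b*b) + (a*b + b*a).
Proof. by rewrite !mulrDr !mulrDl (addrC (a*b)) addrACA (addrC (b*a)). Qed.

Lemma mm_id (T : pzRingType) (a b : T) :
  (a-b)*(a-b) = (a*a + b*b) - (a*b + b*a).
Proof. by rewrite !mulrDr !mulrDl !mulrN !mulNr opprD opprK [- (a*b) + _]addrC addrACA [- (b*a) + _]addrC. Qed.

Section Cliff.
Variable R : realType.
Variable Gam : 'I_11 -> 'M[R]_32.
Hypothesis HC : forall M N : 'I_11,
  Gam M * Gam N + Gam N * Gam M = (2 * @Defs.eta R M N)%:M.

Lemma eta_off (M N : 'I_11) : M != N -> @Defs.eta R M N = 0.
Proof. by rewrite /Defs.eta => /negbTE ->. Qed.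

Lemma Gsq M : Gam M * Gam M = (@Defs.eta R M M)%:M.
Proof.
have h2 : forall Y : 'M[R]_32, Y + Y = (2:R) *: Y.
  by move=> Y; rewrite scaler_nat mulr2n.
have := HC M M; rewrite h2; move/(congr1 (fun Y => (2:R)^-1 *: Y)).
rewrite scalerA mulVf ?pnatr_eq0 // scale1r => ->.
by rewrite scale_scalar_mx mulrA mulVf ?pnatr_eq0 // mul1r.
Qed.

Lemma Ganti M N : M != N -> Gam M * Gam N = - (Gam N * Gam M).
Proof.
move=> MN; have := HC M N; rewrite eta_off // mulr0 => /eqP.
by rewrite raddf0 addr_eq0 => /eqP.
Qed.

Lemma G0sq : Gam ord0 * Gam ord0 = -1.
Proof. by rewrite Gsq /Defs.eta eqxx /= raddfN. Qed.

Lemma G9sq : Gam i9 * Gam i9 = 1.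
Proof. by rewrite Gsq /Defs.eta eqxx. Qed.

Lemma G09 : Gam ord0 * Gam i9 + Gam i9 * Gam ord0 = 0.
Proof. by rewrite HC eta_off // mulr0 raddf0. Qed.

Lemma Gp2 : Gplus Gam * Gplus Gam = 0.
Proof. by rewrite /Gplus pp_id G0sq G9sq G09 addNr addr0. Qed.

Lemma Gm2 : Gminus Gam * Gminus Gam = 0.
Proof. by rewrite /Gminus mm_id G0sq G9sq G09 addNr subr0. Qed.

Lemma GpGm : Gplus Gam * Gminus Gam + Gminus Gam * Gplus Gam = (-4 : R) *: 1.
Proof.
rewrite scaleNr scaler_nat.
by rewrite /Gplus /Gminus pm_id G0sq G9sq -opprD -mulr2n mulNrn -mulrnA.
Qed.


Lemma decomp (A B : 'M[R]_32) : A * B + B * A = (-4 : R) *: 1 ->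
  forall v : 'cV[R]_32,
  v = (-4)^-1 *: (A *m (B *m v)) + (-4)^-1 *: (B *m (A *m v)).
Proof.
move=> H v.
rewrite -scalerDr !mulmxA -mulmxDl.
by rewrite mulmxE H -scalemxAl mul1mx scalerA mulVf ?scale1r // oppr_eq0 pnatr_eq0.
Qed.

Lemma anti_sum (a b : 'I_11 -> R) :
  (\sum_M a M *: Gam M) * (\sum_N b N *: Gam N) +
  (\sum_N b N *: Gam N) * (\sum_M a M *: Gam M)
  = (2 * \sum_M \sum_N @Defs.eta R M N * a M * b N)%:M.
Proof.
rewrite !mulr_suml.
under eq_bigr do rewrite mulr_sumr.
under [X in _ + X]eq_bigr do rewrite mulr_sumr.
rewrite [X in _ + X]exchange_big -big_split /=.
rewrite mulr_sumr raddf_sum; apply: eq_bigr => M _.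
rewrite -big_split mulr_sumr raddf_sum; apply: eq_bigr => N _ /=.
rewrite -!scalerAl -!scalerAr !scalerA [b N * a M]mulrC -scalerDr HC.
rewrite scale_scalar_mx; congr (_%:M).
rewrite -[RHS]/((@Defs.eta R M N * a M * 2) * b N); ring.
Qed.

End Cliff.

Section VS.
Variable R : realType.

Definition subsp (S : set 'cV[R]_32) :=
  S 0 /\ (forall (a : R) u v, S u -> S v -> S (a *: u + v)).

Lemma subsp_scale S a u : subsp S -> S u -> S (a *: u).
Proof. by move=> [S0 Sl] Su; rewrite -[a *: u]addr0; apply: Sl. Qed.

Lemma subsp_add S u v : subsp S -> S u -> S v -> S (u + v).
Proof. by move=> [S0 Sl] Su Sv; rewrite -[u]scale1r; apply: Sl. Qed.

Lemma subsp_I S T : subsp S -> subsp T -> subsp (S `&` T).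
Proof.
move=> [S0 Sl] [T0 Tl]; split; first by split.
by move=> a u v [Su Tu] [Sv Tv]; split; [apply: Sl | apply: Tl].
Qed.

Lemma subsp_vs (S : set 'cV[R]_32) : subsp S ->
  exists U : {vspace 'cV[R]_32}, forall v, v \in U <-> S v.
Proof.
move=> hS.
pose P := fun d : nat => `[< exists U : {vspace 'cV[R]_32},
   \dim U = d /\ (forall v, v \in U -> S v) >].
have P0 : exists d, P d.
  exists 0%N; apply/asboolP; exists 0%VS; split; first by rewrite dimv0.
  by move=> v; rewrite memv0 => /eqP ->; case: hS.
have Pb : forall d, P d -> (d <= 32)%N.
  move=> d /asboolP [U [<- _]].
  by have := dimvS (subvf U); rewrite dimvf /dim /= muln1.
case: (ex_maxnP P0 Pb) => d /asboolP [U [dU US]] dmax.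
exists U => v; split; first exact: US.
move=> Sv.
have HU' : forall w, w \in (U + <[v]>)%VS -> S w.
  move=> w /memv_addP [u uU [x /vlineP [k ->] ->]].
  by rewrite addrC; apply: (proj2 hS) => //; apply: US.
have : (\dim (U + <[v]>) <= d)%N by apply: dmax; apply/asboolP; exists (U + <[v]>)%VS.
rewrite -dU => hd.
have : (U == U + <[v]>)%VS by rewrite eqEdim addvSl hd.
move/eqP => ->.
by apply: (subvP (addvSr U <[v]>)); apply: memv_line.
Qed.

Lemma dimS_eq (S : set 'cV[R]_32) (U : {vspace 'cV[R]_32}) :
  (forall v, v \in U <-> S v) -> dimS S = \dim U.
Proof.
move=> HU; rewrite /dimS /vspace_of.
have ex : exists U : {vspace 'cV[R]_32}, forall v, v \in U <-> S v by exists U.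
have := xgetPex 0%VS ex; set V := xget _ _ => HV.
congr (\dim _); apply/vspaceP => v.
apply/idP/idP => h; [apply/(proj2 (HU v)); apply/(proj1 (HV v)) | apply/(proj2 (HV v)); apply/(proj1 (HU v))]; exact: h.
Qed.

End VS.

Section DIMS.
Variable R : realType.

Lemma dim_iso (A : 'M[R]_32) (S T : set 'cV[R]_32) :
  subsp S -> subsp T -> iso_onto A S T -> dimS S = dimS T.
Proof.
move=> hS hT [h1 [h2 h3]].
have [U HU] := subsp_vs hS; have [V HV] := subsp_vs hT.
rewrite (dimS_eq HU) (dimS_eq HV).
pose f : 'End('cV[R]_32) := linfun (mulmx A).
have fE : forall v, f v = A *m v by move=> v; rewrite lfunE.
have img : (f @: U)%VS = V.
  apply/vspaceP => w; apply/idP/idP.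
    move=> /memv_imgP [u uU ->]; rewrite fE; apply/(proj2 (HV _)); apply: h1.
    exact/(proj1 (HU _)).
  move=> /(proj1 (HV _)) Tw; have [u [Su <-]] := h3 w Tw; rewrite -fE.
  by apply: memv_img; apply/(proj2 (HU _)).
rewrite -img limg_dim_eq //.
apply/eqP; rewrite -subv0; apply/subvP => x /memv_capP [xU].
rewrite memv_ker fE => /eqP Ax.
rewrite memv0; apply/eqP; apply: h2.
- exact/(proj1 (HU _)).
- by case: hS.
- by rewrite Ax mulmx0.
Qed.

Lemma dim_dsum (S A B : set 'cV[R]_32) :
  subsp A -> subsp B -> direct_sum S A B -> dimS S = (dimS A + dimS B)%N.
Proof.
move=> hA hB [h1 h2].
have [U HU] := subsp_vs hA; have [V HV] := subsp_vs hB.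
have HW : forall v, v \in (U + V)%VS <-> S v.
  move=> v; split.
    move=> /memv_addP [a aU [b bV ->]]; apply/(proj2 (h1 _)).
    by exists a, b; split; [apply/(proj1 (HU _)) | split; [apply/(proj1 (HV _))|]].
  move=> /(proj1 (h1 _)) [a [b [Aa [Bb ->]]]]; apply: memv_add.
    exact/(proj2 (HU _)).
  exact/(proj2 (HV _)).
rewrite (dimS_eq HW) (dimS_eq HU) (dimS_eq HV) dimv_disjoint_sum //.
apply/eqP; rewrite -subv0; apply/subvP => x /memv_capP [xU xV].
rewrite memv0; apply/eqP; apply: h2; [exact/(proj1 (HU _)) | exact/(proj1 (HV _))].
Qed.

Lemma dim_le (S T : set 'cV[R]_32) :
  subsp S -> subsp T -> S `<=` T -> (dimS S <= dimS T)%N.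
Proof.
move=> hS hT ST.
have [U HU] := subsp_vs hS; have [V HV] := subsp_vs hT.
rewrite (dimS_eq HU) (dimS_eq HV); apply: dimvS; apply/subvP => x xU.
by apply/(proj2 (HV _)); apply: ST; apply/(proj1 (HU _)).
Qed.

End DIMS.

Section Main.
Variable R : realType.
Variable Gam : 'I_11 -> 'M[R]_32.
Hypothesis HC : forall M N : 'I_11,
  Gam M * Gam N + Gam N * Gam M = (2 * @Defs.eta R M N)%:M.

Lemma cm_sum (I : Type) (r : seq I) (P : pred I) (F : I -> 'M[R]_32) A :
  (forall i, P i -> F i * A = A * F i) ->
  (\sum_(i <- r | P i) F i) * A = A * \sum_(i <- r | P i) F i.
Proof. by move=> h; rewrite mulr_suml mulr_sumr; apply: eq_bigr. Qed.

Lemma cm_scale (c : R) (X A : 'M[R]_32) : X * A = A * X -> (c *: X) * A = A * (c *: X).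
Proof. by move=> h; rewrite -scalerAl -scalerAr h. Qed.

Lemma cm_prod (s : seq 'M[R]_32) (F : 'M[R]_32 -> 'M[R]_32) A :
  (forall X, X \in s -> F X * A = A * F X) ->
  (\prod_(X <- s) F X) * A = A * \prod_(X <- s) F X.
Proof.
elim: s => [|a s IH] h; first by rewrite big_nil mul1r mulr1.
rewrite big_cons -mulrA IH; last by move=> X Xs; apply: h; rewrite inE Xs orbT.
by rewrite mulrA h ?mem_head // mulrA.
Qed.

Lemma comm2 (i j M : 'I_11) : i != M -> j != M ->
  (Gam i * Gam j) * Gam M = Gam M * (Gam i * Gam j).
Proof.
move=> iM jM.
rewrite -mulrA (Ganti HC jM) mulrN [in LHS]mulrA (Ganti HC iM) mulNr opprK. by rewrite mulrA.
Qed.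

Lemma spin_commM (X : 'M[R]_32) (M : 'I_11) : (M == ord0) || (M == i9) ->
  spin8_alg Gam X -> X * Gam M = Gam M * X.
Proof.
move=> hM [c ->]; apply: cm_sum => i hi; apply: cm_sum => j /andP [hij hj8].
apply: cm_scale; rewrite /Sig; apply: cm_scale; apply: comm2.
- apply/eqP => e; move: hM; rewrite -e => /orP [/eqP ei|/eqP ei].
    by move: hi; rewrite ei.
  by move: hij hj8; rewrite ei /=; case: j => [[|[|[|[|[|[|[|[|[|[|[|]]]]]]]]]]]].
- apply/eqP => e; move: hM; rewrite -e => /orP [/eqP ei|/eqP ei].
    by move: hij; rewrite ei.
  by move: hj8; rewrite ei.
Qed.

Lemma mulmxM (A B : 'M[R]_32) (v : 'cV[R]_32) : (A * B) *m v = A *m (B *m v).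
Proof. by rewrite mulmxA. Qed.

Lemma half_eq (Y : 'M[R]_32) (t : R) : Y + Y = (2 * t)%:M -> Y = t%:M.
Proof.
have h2 : Y + Y = (2:R) *: Y by rewrite scaler_nat mulr2n.
rewrite h2 => /(congr1 (fun Z => (2:R)^-1 *: Z)).
rewrite scalerA mulVf ?pnatr_eq0 // scale1r => ->.
by rewrite scale_scalar_mx mulrA mulVf ?pnatr_eq0 // mul1r.
Qed.

Lemma spin8_commM g (M : 'I_11) : (M == ord0) || (M == i9) ->
  Spin8 Gam g -> g * Gam M = Gam M * g.
Proof.
move=> hM [s [hs ->]]; apply: cm_prod => X Xs; apply: mexp_comm.
exact: spin_commM (hs X Xs).
Qed.

Lemma spin8_comm g : Spin8 Gam g ->
  g * Gplus Gam = Gplus Gam * g /\ g * Gminus Gam = Gminus Gam * g.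
Proof.
move=> hg; rewrite /Gplus /Gminus mulrDr mulrDl mulrBr mulrBl.
by rewrite !(spin8_commM _ hg).
Qed.

Lemma Gp_anti (mu : 'I_11) : mu != ord0 -> mu != i9 ->
  Gplus Gam * Gam mu = - (Gam mu * Gplus Gam).
Proof.
move=> h0 h9; rewrite /Gplus mulrDl mulrDr.
by rewrite (Ganti HC (M:=ord0)) 1?eq_sym // (Ganti HC (M:=i9)) 1?eq_sym // opprD.
Qed.

Definition Pmu (mu : 'I_11) := (mu != ord0) && (mu != i9).

Lemma Gp_anti_sum (c : 'I_11 -> R) :
  Gplus Gam * (\sum_(mu < 11 | Pmu mu) c mu *: Gam mu) =
  - ((\sum_(mu < 11 | Pmu mu) c mu *: Gam mu) * Gplus Gam).
Proof.
rewrite mulr_sumr mulr_suml -sumrN; apply: eq_bigr => mu /andP [h0 h9].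
by rewrite -scalerAr -scalerAl Gp_anti // scalerN.
Qed.

Lemma SigPlus_sum (c : 'I_11 -> R) :
  \sum_(mu < 11 | (mu != ord0) && (mu != i9)) c mu *: SigPlus Gam mu =
  (- (2%:R^-1)) *: (Gplus Gam * (\sum_(mu < 11 | Pmu mu) c mu *: Gam mu)).
Proof.
rewrite mulr_sumr scaler_sumr; apply: eq_bigr => mu _.
by rewrite /SigPlus scalerA mulrC -scalerA scalerAr.
Qed.

Lemma X2 (c : 'I_11 -> R) :
  let X := \sum_(mu < 11 | Pmu mu) c mu *: Gam mu in
  X * X = (\sum_(mu < 11 | Pmu mu) c mu * c mu)%:M.
Proof.
move=> X.
pose c' := fun mu => if Pmu mu then c mu else 0.
have XE : X = \sum_mu c' mu *: Gam mu.
  rewrite /X big_mkcond /=; apply: eq_bigr => mu _; rewrite /c'.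
  by case: ifP => //; rewrite scale0r.
apply: half_eq; rewrite XE anti_sum //; congr ((2 * _)%:M).
rewrite [RHS]big_mkcond /=; apply: eq_bigr => M _.
rewrite (bigD1 M) //= big1 ?addr0; last first.
  by move=> N NM; rewrite eta_off 1?eq_sym // !mul0r.
rewrite /c'; case: ifP => [/andP [h0 h9]|]; last by rewrite !mulr0.
by rewrite /Defs.eta eqxx (negbTE h0) mul1r.
Qed.

Lemma null_fix n (v : 'cV[R]_32) : NullRot Gam n -> Gplus Gam *m v = 0 -> n *m v = v.
Proof.
move=> [c ->] hv.
rewrite SigPlus_sum mulmxDl mul1mx -scalemxAl Gp_anti_sum mulNmx mulmxM hv.
by rewrite mulmx0 oppr0 scaler0 addr0.
Qed.

Lemma null_fix_inv n (v : 'cV[R]_32) : NullRot Gam n -> n <> 1 -> n *m v = v ->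
  Gplus Gam *m v = 0.
Proof.
move=> [c En] n1 hv.
set X := \sum_(mu < 11 | Pmu mu) c mu *: Gam mu.
have hX : (Gplus Gam * X) *m v = 0.
  move: hv; rewrite En SigPlus_sum mulmxDl mul1mx -scalemxAl.
  rewrite -[X in _ = X]addr0 => /addrI /eqP.
  by rewrite scaler_eq0 oppr_eq0 invr_eq0 pnatr_eq0 /= => /eqP.
have s_ne : (\sum_(mu < 11 | Pmu mu) c mu * c mu) != 0.
  apply/negP => /eqP s0; apply: n1; rewrite En SigPlus_sum.
  have c0 : forall mu, Pmu mu -> c mu = 0.
    move=> mu hmu; have h := psumr_eq0P _ s0 hmu.
    have {}h : c mu * c mu = 0 by apply: h => i _; rewrite -expr2 sqr_ge0.
    by apply/eqP; rewrite -[c mu == 0]orbb -mulf_eq0 h.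
  rewrite -/X; have -> : X = 0 by rewrite /X big1 // => mu hmu; rewrite c0 // scale0r.
  by rewrite mulr0 scaler0 addr0.
have h1 : X *m (Gplus Gam *m v) = 0.
  by move: hX; rewrite Gp_anti_sum mulNmx mulmxM => /eqP; rewrite oppr_eq0 => /eqP.
have : (X * X) *m (Gplus Gam *m v) = 0 by rewrite mulmxM h1 mulmx0.
rewrite X2 mul_scalar_mx => /eqP; rewrite scaler_eq0 (negbTE s_ne) /=.
by move/eqP.
Qed.

Lemma GamV_sum (a : 'I_6 -> R) (w : 'I_6 -> 'rV[R]_11) :
  GamV Gam (\sum_k a k *: w k) = \sum_k a k *: GamV Gam (w k).
Proof.
rewrite /GamV.
transitivity (\sum_M \sum_k (a k * w k ord0 M) *: Gam M).
  apply: eq_bigr => M _; rewrite summxE scaler_suml; apply: eq_bigr => k _.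
  by rewrite mxE.
rewrite exchange_big; apply: eq_bigr => k _; rewrite scaler_sumr.
by apply: eq_bigr => M _; rewrite scalerA.
Qed.

Lemma GamV_evec M : GamV Gam (evec R M) = Gam M.
Proof.
rewrite /GamV (bigD1 M) //= big1 ?addr0 => [|N NM]; rewrite mxE.
  by rewrite eqxx scale1r.
by rewrite (negbTE NM) scale0r.
Qed.

Lemma GamV_anti x y : etaV x y = 0 -> GamV Gam x * GamV Gam y = - (GamV Gam y * GamV Gam x).
Proof.
move=> e.
have := anti_sum HC (fun M => x ord0 M) (fun M => y ord0 M).
rewrite -/(GamV Gam x) -/(GamV Gam y) -/(etaV x y) e mulr0 raddf0 => /eqP.
by rewrite addr_eq0 => /eqP.
Qed.

Lemma sgn_prod (I : Type) (r : seq I) (x : 'M[R]_32) (f : I -> 'M[R]_32) (s : I -> R) :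
  (forall l, x * f l = s l *: (f l * x)) ->
  x * \prod_(l <- r) f l = (\prod_(l <- r) s l) *: (\prod_(l <- r) f l * x).
Proof.
move=> h; elim: r => [|a r IH]; first by rewrite !big_nil mulr1 mul1r scale1r.
rewrite !big_cons mulrA h -scalerAl -[in LHS](mulrA (f a)) IH -scalerAr scalerA.
by rewrite mulrA.
Qed.

Lemma P_anti (v : 'I_6 -> 'rV[R]_11) :
  (forall k l : 'I_6, k != l -> etaV (v k) (v l) = 0) ->
  forall k, GamV Gam (v k) * (\prod_(l < 6) GamV Gam (v l)) =
            - ((\prod_(l < 6) GamV Gam (v l)) * GamV Gam (v k)).
Proof.
move=> hv k.
rewrite (@sgn_prod _ _ _ _ (fun l : 'I_6 => if l == k then 1 else -1)); last first.
  move=> l; case: eqP => [->|/eqP lk]; first by rewrite scale1r.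
  by rewrite scaleN1r GamV_anti // hv // eq_sym.
rewrite (bigD1 k) //= eqxx mul1r.
rewrite (eq_bigr (fun=> -1)) => [|l /negbTE -> //].
rewrite prodr_const cardC1 card_ord /=.
by rewrite -signr_odd /= expr1 scaleN1r.
Qed.

Lemma Gam_anti_P (v : 'I_6 -> 'rV[R]_11) (M : 'I_11) :
  (forall k l : 'I_6, k != l -> etaV (v k) (v l) = 0) ->
  (exists a : 'I_6 -> R, evec R M = \sum_(k < 6) a k *: v k) ->
  Gam M * (\prod_(l < 6) GamV Gam (v l)) =
    - ((\prod_(l < 6) GamV Gam (v l)) * Gam M).
Proof.
move=> hv [a E].
rewrite -GamV_evec E GamV_sum mulr_suml mulr_sumr -sumrN; apply: eq_bigr => k _.
by rewrite -scalerAl P_anti // scalerN scalerAr.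
Qed.

Lemma subsp_inv (K : set 'M[R]_32) : subsp (invariants K).
Proof.
split; first by move=> h _; rewrite mulmx0.
by move=> a u v hu hv h Kh; rewrite mulmxDr -scalemxAr hu // hv.
Qed.

Lemma subsp_ker (A : 'M[R]_32) : subsp (kerM A).
Proof.
split; first by rewrite /kerM /= mulmx0.
by move=> a u v; rewrite /kerM /= => hu hv; rewrite mulmxDr -scalemxAr hu hv scaler0 addr0.
Qed.

Lemma subsp_fix (A : 'M[R]_32) : subsp (fixsp A).
Proof.
split; first by rewrite /fixsp /= mulmx0.
by move=> a u v; rewrite /fixsp /= => hu hv; rewrite mulmxDr -scalemxAr hu hv.
Qed.

Lemma inv_closed (K : set 'M[R]_32) (A : 'M[R]_32) v :
  (forall k, K k -> k * A = A * k) -> invariants K v -> invariants K (A *m v).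
Proof.
move=> hc hv k Kk; have e : k *m A = A *m k := hc k Kk.
by rewrite mulmxA e -mulmxA hv.
Qed.

Lemma iso_gen2 (A B : 'M[R]_32) (S Q1 Q2 : set 'cV[R]_32) :
  A * A = 0 -> B * B = 0 -> A * B + B * A = (-4 : R) *: 1 ->
  subsp S -> subsp Q1 ->
  (forall v, S v -> S (A *m v)) -> (forall v, S v -> S (B *m v)) ->
  (forall v, Q1 v -> Q2 (A *m v)) -> (forall w, Q2 w -> Q1 (B *m w)) ->
  iso_onto A ((S `&` kerM B) `&` Q1) ((S `&` kerM A) `&` Q2).
Proof.
move=> AA BB AB hS hQ1 SA SB QA QB.
have dec := decomp AB.
split.
  move=> v [[Sv Bv] Qv]; split; last exact: QA.
  by split; [apply: SA | rewrite /kerM /= -(mulmxM A A) AA mul0mx].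
split.
  move=> v w [[Sv Bv] _] [[Sw Bw] _] Avw; apply/eqP; rewrite -subr_eq0; apply/eqP.
  have e1 : B *m (v - w) = 0 by rewrite mulmxBr Bv Bw subrr.
  have e2 : A *m (v - w) = 0 by rewrite mulmxBr Avw subrr.
  by rewrite (dec (v - w)) e1 e2 !mulmx0 !scaler0 addr0.
move=> w [[Sw Aw] Qw].
exists ((-4)^-1 *: (B *m w)); split.
  split; last by apply: subsp_scale => //; apply: QB.
  split; first by apply: subsp_scale => //; apply: SB.
  by rewrite /kerM /= -scalemxAr -(mulmxM B B) BB mul0mx scaler0.
have e := dec w; rewrite Aw mulmx0 scaler0 addr0 in e.
by rewrite -scalemxAr; exact/esym.
Qed.

Lemma dsum_gen (A B : 'M[R]_32) (S : set 'cV[R]_32) :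
  A * A = 0 -> B * B = 0 -> A * B + B * A = (-4 : R) *: 1 ->
  subsp S -> (forall v, S v -> S (A *m v)) -> (forall v, S v -> S (B *m v)) ->
  direct_sum S (S `&` kerM A) (S `&` kerM B).
Proof.
move=> AA BB AB hS SA SB.
have dec := decomp AB.
split.
  move=> v; split.
    move=> Sv; exists ((-4)^-1 *: (A *m (B *m v))), ((-4)^-1 *: (B *m (A *m v))).
    split.
      split; first by apply: subsp_scale => //; apply: SA; apply: SB.
      by rewrite /kerM /= -scalemxAr -(mulmxM A A) AA mul0mx scaler0.
    split; last exact: dec.
    split; first by apply: subsp_scale => //; apply: SB; apply: SA.
    by rewrite /kerM /= -scalemxAr -(mulmxM B B) BB mul0mx scaler0.
  by move=> [a [b [[Sa _] [[Sb _] ->]]]]; apply: subsp_add.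
move=> v [_ Av] [_ Bv].
by rewrite (dec v) Av Bv !mulmx0 !scaler0 addr0.
Qed.

Lemma fix_map (Y A : 'M[R]_32) v : A * Y = - (Y * A) ->
  fixsp Y v -> fixsp (- Y) (A *m v).
Proof.
move=> hA hv; rewrite /fixsp /= mulNmx -mulmxM -mulNmx -hA mulmxM.
by rewrite hv.
Qed.

Lemma fix_map2 (Y A : 'M[R]_32) v : A * Y = - (Y * A) ->
  fixsp (- Y) v -> fixsp Y (A *m v).
Proof.
move=> hA hv; rewrite /fixsp /=.
have hA' : Y * A = - (A * Y) by rewrite hA opprK.
rewrite -mulmxM hA' mulNmx mulmxM -mulmxN -mulNmx.
by rewrite hv.
Qed.
End Main.

Unset Implicit Arguments.

Theorem mainTheorem7 (R : realType) (Gam : 'I_11 -> 'M[R]_32)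
  (K N : set 'M[R]_32) :
  clifford_rep Gam ->
  is_subgroup K -> K `<=` Spin8 Gam ->
  is_subgroup N -> N `<=` NullRot Gam -> (exists n, N n /\ n <> 1) ->
  let G := gen_subgroup (K `|` N) in
  let DK := invariants K in
  let DKp := DK `&` kerM (Gplus Gam) in
  let DKm := DK `&` kerM (Gminus Gam) in
  (* (i) *)
  (direct_sum DK DKp DKm /\
   iso_onto (Gplus Gam) DKm DKp /\ iso_onto (Gminus Gam) DKp DKm /\
   (2 * dimS DKp)%N = dimS DK /\ (2 * dimS DKm)%N = dimS DK /\
   ~~ odd (dimS DK)) /\
  (* (ii) *)
  (invariants G = DKp /\ (2 * dimS (invariants G))%N = dimS DK) /\
  (* (iii) *)
  (forall v : 'I_6 -> 'rV[R]_11,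
     (forall k l : 'I_6, k != l -> etaV (v k) (v l) = 0) ->
     (forall k : 'I_6, etaV (v k) (v k) = 1 \/ etaV (v k) (v k) = -1) ->
     (exists a : 'I_6 -> R, evec R ord0 = \sum_(k < 6) a k *: v k) ->
     (exists a : 'I_6 -> R, evec R i9 = \sum_(k < 6) a k *: v k) ->
     let P := \prod_(k < 6) GamV Gam (v k) in
     iso_onto (Gplus Gam) (DKm `&` fixsp P) (DKp `&` fixsp (- P)) /\
     iso_onto (Gplus Gam) (DKm `&` fixsp (- P)) (DKp `&` fixsp P) /\
     (2 * dimS (fixsp P `&` invariants G) <= dimS DK)%N).
Proof.
move=> [HC _] hK KS hN NS [n0 [Nn0 n01]] G DK DKp DKm.
have Kc : forall k, K k -> k * Gplus Gam = Gplus Gam * k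
    /\ k * Gminus Gam = Gminus Gam * k.
  by move=> k Kk; apply: (spin8_comm HC); apply: KS.
have Kcp : forall k, K k -> k * Gplus Gam = Gplus Gam * k by move=> k /Kc [].
have Kcm : forall k, K k -> k * Gminus Gam = Gminus Gam * k by move=> k /Kc [].
have sDK : subsp DK := subsp_inv K.
have sDKp : subsp DKp := subsp_I sDK (subsp_ker _).
have sDKm : subsp DKm := subsp_I sDK (subsp_ker _).
have SA : forall v, DK v -> DK (Gplus Gam *m v) by move=> v; apply: inv_closed.
have SB : forall v, DK v -> DK (Gminus Gam *m v) by move=> v; apply: inv_closed.
have AA := Gp2 HC; have BB := Gm2 HC; have AB := GpGm HC.
have BA : Gminus Gam * Gplus Gam + Gplus Gam * Gminus Gam = (-4 : R) *: 1.
  by rewrite addrC.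
have sT : subsp (@setT 'cV[R]_32).
  by split.
have iso1 : iso_onto (Gplus Gam) DKm DKp.
  have := @iso_gen2 _ _ _ _ setT setT AA BB AB sDK sT SA SB (fun _ _ => I) (fun _ _ => I).
  by rewrite !setIT.
have iso2 : iso_onto (Gminus Gam) DKp DKm.
  have := @iso_gen2 _ _ _ _ setT setT BB AA BA sDK sT SB SA (fun _ _ => I) (fun _ _ => I).
  by rewrite !setIT.
have ds : direct_sum DK DKp DKm := dsum_gen AA BB AB sDK SA SB.
have dpm : dimS DKm = dimS DKp := dim_iso sDKm sDKp iso1.
have dK : dimS DK = (dimS DKp + dimS DKm)%N := dim_dsum sDKp sDKm ds.
have d2 : (2 * dimS DKp)%N = dimS DK by rewrite dK dpm mul2n addnn.
have invG : invariants G = DKp.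
  apply/seteqP; split => v.
    move=> hv.
    have DKv : DK v.
      by move=> k Kk; apply: hv => H _ KNH; apply: KNH; left.
    split => //; rewrite /kerM /=.
    apply: (null_fix_inv HC (NS n0 Nn0) n01).
    by apply: hv => H _ KNH; apply: KNH; right.
  move=> [DKv Gpv] h Gh.
  pose H := [set g : 'M[R]_32 | g \in unitmx /\ g *m v = v].
  have : H h.
    apply: Gh.
      split; first by split; [exact: unitmx1 | exact: mul1mx].
      split.
        move=> a b [ua va] [ub vb]; split; first by rewrite unitmx_mul ua ub.
        by rewrite mulmxM vb va.
      move=> a [ua va]; split => //; split; first by rewrite unitmx_inv.
      by rewrite -{1}va (mulKmx ua).
    move=> g [Kg|Ng].
      split; first by have [_ [_ /(_ g Kg) []]] := hK.
      exact: DKv.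
    split; first by have [_ [_ /(_ g Ng) []]] := hN.
    exact: (null_fix HC (NS g Ng)).
  by case.
split.
  do 5 (split => //).
    by rewrite dpm.
  by rewrite -d2 mul2n odd_double.
split.
  by split => //; rewrite invG.
move=> v hort _ h0 h9 P.
have GpP : Gplus Gam * P = - (P * Gplus Gam).
  by rewrite /Gplus mulrDl mulrDr (Gam_anti_P HC hort h0) (Gam_anti_P HC hort h9) opprD.
have GmP : Gminus Gam * P = - (P * Gminus Gam).
  by rewrite /Gminus mulrBl mulrBr (Gam_anti_P HC hort h0) (Gam_anti_P HC hort h9) opprB addrC opprK.
have GpNP : Gplus Gam * (- P) = - ((- P) * Gplus Gam) by rewrite mulrN mulNr GpP.
have GmNP : Gminus Gam * (- P) = - ((- P) * Gminus Gam) by rewrite mulrN mulNr GmP.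
split.
  apply: (iso_gen2 AA BB AB sDK (subsp_fix P) SA SB).
    by move=> w; apply: fix_map.
  by move=> w; apply: fix_map2.
split.
  have := @iso_gen2 _ _ _ _ (fixsp (- P)) (fixsp P) AA BB AB sDK (subsp_fix (- P)) SA SB.
  apply.
    by move=> w /(fix_map GpNP); rewrite opprK.
  by move=> w hw; apply: fix_map2; rewrite ?opprK.
rewrite invG -d2 leq_mul2l /=.
apply: dim_le.
- exact: subsp_I (subsp_fix P) sDKp.
- exact: sDKp.
- by move=> w [].
Qed.
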